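(* Consider scheduling a single task on $n=2$ machines without payments, in the model where machines are bound by their declarations (described in the context). Fix constants $L>2$ and $c>1$, and let $\mathcal A^{(2)}_{L,c}$ be the following randomized allocation rule. Given declarations, call the machine with the smaller declaration machine $1$ and the other machine $2$, so that $\hat t_1\le \hat t_2$. Then machine $1$ receives the task with probability $a_1$ and machine $2$ with probability $a_2=1-a_1$, where: (i) if $\hat t_1=\hat t_2$: $a_1=a_2=\tfrac12$; (ii) if $\hat t_1<\hat t_2<c\,\hat t_1$: $a_1=\tfrac1L$, $a_2=1-\tfrac1L$; (iii) if $c\,\hat t_1\le \hat t_2$: $a_1=1-\tfrac{1}{L}\tfrac{\hat t_1}{\hat t_2}$, $a_2=\tfrac1L\tfrac{\hat t_1}{\hat t_2}$. Then the pure Price of Anarchy of $\mathcal A^{(2)}_{L,c}$ is at most $1+\frac1L$.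
   Context: Model: there are $n$ machines and one task. Machine $i$ has a private true execution time $t_i\ge 0$ for the task and reports a declaration $\hat t_i\ge 0$. A (randomized) allocation rule maps the declaration vector $\hat{\mathbf t}$ to probabilities $a_i(\hat{\mathbf t})$ with $\sum_i a_i=1$; no payments are used. Machines are bound by their declarations: if machine $i$ gets the task she executes it for time $\max\{\hat t_i,t_i\}$. Hence the (expected) cost of machine $i$ is $C_i(\hat{\mathbf t})=a_i(\hat{\mathbf t})\max\{\hat t_i,t_i\}$, and the makespan (which for one task equals the expected execution time of the task) is $\mathcal M(\hat{\mathbf t})=\sum_i a_i(\hat{\mathbf t})\max\{\hat t_i,t_i\}$. A pure Nash equilibrium is a deterministic declaration vector $\hat{\mathbf t}$ such that for every machine $i$ and every alternative declaration $x\ge 0$, $C_i(\hat{\mathbf t})\le C_i(x,\hat{\mathbf t}_{-i})$. The pure Price of Anarchy of a rule is the supremum, over all true instances $\mathbf t$, of the ratio of the makespan of the worst pure Nash equilibrium to the optimal makespan $\min_i t_i$ (the best centralized allocation with respect to the true times). *)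

(* Defs.v *)
From Stdlib Require Import Reals Lra.
Open Scope R_scope.

(* Allocation rule A^(2)_{L,c}: probability that a machine declaring [x]
   receives the task when the other machine declares [y]. *)
Definition alloc (L c x y : R) : R :=
  if Req_EM_T x y then 1/2
  else if Rlt_dec x y then
    (* this machine is "machine 1" (smaller declaration) *)
    (if Rlt_dec y (c * x) then 1 / L else 1 - (1 / L) * (x / y))
  else
    (* this machine is "machine 2" (larger declaration), other is smaller *)
    (if Rlt_dec x (c * y) then 1 - 1 / L else (1 / L) * (y / x)).

Definition cost (L c t x y : R) : R := alloc L c x y * Rmax x t.

Definition makespan (L c t1 t2 d1 d2 : R) : R :=
  alloc L c d1 d2 * Rmax d1 t1 + alloc L c d2 d1 * Rmax d2 t2.

Definition pure_NE (L c t1 t2 d1 d2 : R) : Prop :=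
  0 <= d1 /\ 0 <= d2 /\
  (forall x, 0 <= x -> cost L c t1 d1 d2 <= cost L c t1 x d2) /\
  (forall x, 0 <= x -> cost L c t2 d2 d1 <= cost L c t2 x d1).

(* Main.v *)
Require Import Defs.
From Stdlib Require Import Reals Lra Psatz.
Open Scope R_scope.

Lemma alloc_eq L c x : alloc L c x x = 1/2.
Proof. unfold alloc; destruct (Req_EM_T x x); [reflexivity|congruence]. Qed.

Lemma alloc_lt_ii L c x y : x < y -> y < c * x -> alloc L c x y = 1/L.
Proof. intros H1 H2; unfold alloc; destruct (Req_EM_T x y); [lra|].
destruct (Rlt_dec x y); [|lra]. destruct (Rlt_dec y (c*x)); [reflexivity|lra]. Qed.

Lemma alloc_lt_iii L c x y : x < y -> c * x <= y -> alloc L c x y = 1 - 1/L * (x/y).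
Proof. intros H1 H2; unfold alloc; destruct (Req_EM_T x y); [lra|].
destruct (Rlt_dec x y); [|lra]. destruct (Rlt_dec y (c*x)); [lra|reflexivity]. Qed.

Lemma alloc_gt_iii L c x y : y < x -> c * y <= x -> alloc L c x y = 1/L * (y/x).
Proof. intros H1 H2; unfold alloc; destruct (Req_EM_T x y); [lra|].
destruct (Rlt_dec x y); [lra|]. destruct (Rlt_dec x (c*y)); [lra|reflexivity]. Qed.

Lemma between c a : 1 < c -> 0 < a -> exists x, 0 < x /\ x < a /\ a < c * x.
Proof.
  intros Hc Ha. exists (a * (1 + /c) / 2).
  assert (Hy : c * /c = 1) by (apply Rinv_r; lra).
  assert (0 < /c) by (apply Rinv_0_lt_compat; lra).
  assert (/c < 1) by nra.
  split; [nra|]. split; [nra|].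
  replace (c * (a * (1 + / c) / 2)) with ((a * c + a) / 2)
    by (field; apply Rgt_not_eq; lra).
  nra.
Qed.

Lemma swapNE L c t1 t2 d1 d2 : pure_NE L c t1 t2 d1 d2 -> pure_NE L c t2 t1 d2 d1.
Proof. intros [? [? [? ?]]]; repeat split; auto. Qed.

Lemma iL_bounds L : 2 < L -> 0 < 1/L /\ 1/L < 1/2.
Proof. intros HL. split.
  - apply Rdiv_lt_0_compat; lra.
  - unfold Rdiv; rewrite !Rmult_1_l; apply Rinv_lt_contravar; lra.
Qed.

Lemma main_lt (L c : R) (HL : 2 < L) (Hc : 1 < c) t1 t2 d1 d2 :
  0 <= t1 -> 0 <= t2 -> pure_NE L c t1 t2 d1 d2 -> d1 < d2 ->
  makespan L c t1 t2 d1 d2 <= (1 + 1 / L) * Rmin t1 t2.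
Proof.
  intros Ht1 Ht2 [Hd1 [Hd2 [N1 N2]]] Hlt.
  destruct (iL_bounds L HL) as [iL0 iL1].
  unfold makespan, cost in *.
  destruct (Rlt_le_dec d2 (c * d1)) as [Hii | Hiii].
  -
    exfalso.
    assert (Hd1p : 0 < d1) by nra.
    destruct (between c d1 Hc Hd1p) as [x [Hx0 [Hx1 Hx2]]].
    specialize (N2 x (Rlt_le _ _ Hx0)).
    rewrite (alloc_lt_ii L c x d1 Hx1 Hx2) in N2.
    assert (Hg : d2 > d1) by lra.
    unfold alloc in N2 at 1.
    destruct (Req_EM_T d2 d1); [lra|]. destruct (Rlt_dec d2 d1); [lra|].
    destruct (Rlt_dec d2 (c*d1)); [|lra].
    assert (Rmax x t2 <= Rmax d2 t2) by (apply Rle_max_compat_r; lra).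
    assert (d2 <= Rmax d2 t2) by apply Rmax_l.
    nra.
  - assert (Hd2p : 0 < d2) by lra.
    assert (Hq : d2 * / d2 = 1) by (apply Rinv_r; lra).
    assert (Hq0 : 0 < / d2) by (apply Rinv_0_lt_compat; lra).
    rewrite (alloc_lt_iii L c d1 d2 Hlt Hiii) in *.
    rewrite (alloc_gt_iii L c d2 d1 Hlt Hiii) in *.
    unfold Rdiv in *.
    set (iL := 1 * / L) in *.
    set (q := / d2) in *.
    assert (S1 : t1 <= d1).
    { destruct (Rle_lt_dec t1 d1) as [h|h]; [exact h|exfalso].
      set (x := (d1 + Rmin t1 d2) / 2).
      assert (Hm1 : Rmin t1 d2 <= t1) by apply Rmin_l.
      assert (Hm2 : Rmin t1 d2 <= d2) by apply Rmin_r.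
      assert (Hm3 : d1 < Rmin t1 d2) by (apply Rmin_glb_lt; lra).
      assert (Hx1 : d1 < x) by (unfold x; lra).
      assert (Hx2 : x < t1) by (unfold x; lra).
      assert (Hx3 : x < d2) by (unfold x; lra).
      specialize (N1 x ltac:(lra)).
      rewrite (Rmax_right d1 t1) in N1 by lra.
      rewrite (Rmax_right x t1) in N1 by lra.
      assert (Hr : d1 * q < 1) by nra.
      destruct (Rlt_le_dec d2 (c * x)) as [h2|h2].
      + rewrite (alloc_lt_ii L c x d2 Hx3 h2) in N1. unfold Rdiv in N1; change (1 * / L) with iL in N1.
        assert (iL * (d1 * q) < iL) by nra.
        assert (0 < 1 - iL * (d1 * q) - iL) by lra.
        assert (0 < t1) by lra. nra.
      + rewrite (alloc_lt_iii L c x d2 Hx3 h2) in N1. unfold Rdiv in N1.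
        change (1 * / L) with iL in N1; try change (/ d2) with q in N1.
        assert (d1 * q < x * q) by nra.
        assert (iL * (d1 * q) < iL * (x * q)) by nra.
        assert (0 < t1) by lra. nra. }
    assert (S2 : d1 <= t1).
    { destruct (Rle_lt_dec d1 t1) as [h|h]; [exact h|exfalso].
      set (x := (t1 + d1) / 2).
      assert (Hx1 : t1 < x) by (unfold x; lra).
      assert (Hx2 : x < d1) by (unfold x; lra).
      specialize (N1 x ltac:(lra)).
      rewrite (Rmax_left d1 t1) in N1 by lra.
      rewrite (Rmax_left x t1) in N1 by lra.
      rewrite (alloc_lt_iii L c x d2 ltac:(lra) ltac:(nra)) in N1.
      unfold Rdiv in N1. change (1 * / L) with iL in N1; try change (/ d2) with q in N1.
      assert (Hs : (d1 + x) * q < 2) by nra.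
      assert (Hp : 0 < (d1 - x) * (1 - iL * ((d1 + x) * q))).
      { apply Rmult_lt_0_compat; nra. }
      nra. }
    assert (E : d1 = t1) by lra. subst d1.
    rewrite (Rmax_left t1 t1) in * by lra.
    destruct (Req_dec t1 0) as [Z|Z].
    { subst t1. assert (0 <= Rmin 0 t2) by (apply Rmin_glb; lra). nra. }
    assert (Ht1p : 0 < t1) by lra.
    assert (S3 : t2 <= d2).
    { destruct (Rle_lt_dec t2 d2) as [h|h]; [exact h|exfalso].
      specialize (N2 t2 Ht2).
      rewrite (Rmax_right d2 t2) in N2 by lra.
      rewrite (Rmax_left t2 t2) in N2 by lra.
      rewrite (alloc_gt_iii L c t2 t1 ltac:(lra) ltac:(lra)) in N2.
      unfold Rdiv in N2. unfold Rdiv in N2; change (1 * / L) with iL in N2.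
      assert (Ht2i : t2 * / t2 = 1) by (apply Rinv_r; lra).
      assert (t2 * q > 1) by nra.
      assert (iL * t1 * (/ t2 * t2) <= iL * t1 * (/ t2 * t2) ) by lra.
      replace (iL * (t1 * / t2) * t2) with (iL * t1 * (t2 * / t2)) in N2 by ring.
      rewrite Ht2i in N2.
      replace (iL * (t1 * q) * t2) with ((iL * t1) * (t2 * q)) in N2 by ring.
      assert (0 < iL * t1) by nra. nra. }
    rewrite (Rmax_left d2 t2) in * by lra.
    assert (S4 : t1 <= t2).
    { destruct (Rle_lt_dec t1 t2) as [h|h]; [exact h|exfalso].
      destruct (between c t1 Hc Ht1p) as [x0 [Hx0 [Hx1 Hx2]]].
      set (x := Rmax t2 x0).
      assert (Ha : t2 <= x) by apply Rmax_l.
      assert (Hb : x0 <= x) by apply Rmax_r.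
      assert (Hc1 : x < t1) by (apply Rmax_lub_lt; lra).
      specialize (N2 x ltac:(lra)).
      rewrite (alloc_lt_ii L c x t1 Hc1 ltac:(nra)) in N2. unfold Rdiv in N2; change (1 * / L) with iL in N2.
      rewrite (Rmax_left x t2) in N2 by lra.
      replace (iL * (t1 * q) * d2) with (iL * t1 * (d2 * q)) in N2 by ring.
      rewrite Hq in N2. nra. }
    rewrite (Rmin_left t1 t2) by lra.
    replace (iL * (t1 * q) * d2) with (iL * t1 * (d2 * q)) by ring.
    rewrite Hq.
    assert (0 <= t1 * q) by nra.
    assert (0 <= iL * (t1 * q) * t1).
    { apply Rmult_le_pos; [apply Rmult_le_pos|]; lra. }
    nra.
Qed.

Lemma main_eq (L c : R) (HL : 2 < L) (Hc : 1 < c) t1 t2 d :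
  0 <= t1 -> 0 <= t2 -> pure_NE L c t1 t2 d d ->
  makespan L c t1 t2 d d <= (1 + 1 / L) * Rmin t1 t2.
Proof.
  intros Ht1 Ht2 [Hd [_ [N1 N2]]].
  destruct (iL_bounds L HL) as [iL0 iL1].
  unfold makespan, cost in *. rewrite alloc_eq in *.
  destruct (Req_dec d 0) as [Z|Z].
  - subst d. specialize (N1 1 ltac:(lra)). specialize (N2 1 ltac:(lra)).
    rewrite (alloc_gt_iii L c 1 0 ltac:(lra) ltac:(lra)) in N1, N2.
    rewrite (Rmax_right 0 t1) in * by lra. rewrite (Rmax_right 0 t2) in * by lra.
    unfold Rdiv in N1, N2. rewrite Rmult_0_l, Rmult_0_r, Rmult_0_l in N1, N2.
    assert (t1 = 0) by lra. assert (t2 = 0) by lra. subst.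
    rewrite Rmin_left by lra. lra.
  - exfalso. assert (Hdp : 0 < d) by lra.
    destruct (between c d Hc Hdp) as [x [Hx0 [Hx1 Hx2]]].
    specialize (N1 x ltac:(lra)).
    rewrite (alloc_lt_ii L c x d Hx1 Hx2) in N1.
    assert (Rmax x t1 <= Rmax d t1) by (apply Rle_max_compat_r; lra).
    assert (d <= Rmax d t1) by apply Rmax_l.
    nra.
Qed.

Theorem theorem1 (L c : R) (HL : 2 < L) (Hc : 1 < c) :
  forall t1 t2 d1 d2 : R, 0 <= t1 -> 0 <= t2 ->
    pure_NE L c t1 t2 d1 d2 ->
    makespan L c t1 t2 d1 d2 <= (1 + 1 / L) * Rmin t1 t2.
Proof.
  intros t1 t2 d1 d2 H1 H2 HN.
  destruct (Rtotal_order d1 d2) as [h|[h|h]].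
  - exact (main_lt L c HL Hc t1 t2 d1 d2 H1 H2 HN h).
  - subst d2. exact (main_eq L c HL Hc t1 t2 d1 H1 H2 HN).
  - pose proof (main_lt L c HL Hc t2 t1 d2 d1 H2 H1 (swapNE _ _ _ _ _ _ HN) h) as M.
    unfold makespan in *. rewrite Rmin_comm. lra.
Qed.
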